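(* Let $d\ge 2$, $n\ge1$, $0\le k<n$ be integers. The number $N(n,k,d)$ of $[[n,k]]_d$ stabilizer codes equals $$N(n,k,d)=\frac{|\mathrm{Sp}(2n,\mathbb{Z}_d)|}{|T(n,k,d)|},$$ where $T(n,k,d)$ is the set of all $M\in\mathrm{Sp}(2n,\mathbb{Z}_d)$ which, in block form with respect to the partition of rows and columns into consecutive blocks of sizes $(n-k,k,n-k,k)$, have the form $$M=\begin{pmatrix}(A^T)^{-1}&0&0&0\\ M_{21}&M_{22}&0&M_{24}\\ M_{31}&M_{32}&A&M_{34}\\ M_{41}&M_{42}&0&M_{44}\end{pmatrix}$$ with $A\in\mathrm{GL}(n-k,\mathbb{Z}_d)$ and the other blocks arbitrary (for $k=0$: $M=\begin{pmatrix}(A^T)^{-1}&0\\ M_{31}&A\end{pmatrix}$).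
   Context: $\mathbb{Z}_d$ is the ring of integers mod $d$; $\Lambda=\begin{pmatrix}0&I_n\\-I_n&0\end{pmatrix}$, $\mathrm{Sp}(2n,\mathbb{Z}_d)=\{M\in M_{2n}(\mathbb{Z}_d):M^T\Lambda M=\Lambda\}$. Vectors $a_1,\dots,a_m\in\mathbb{Z}_d^{N}$ are linearly independent if $\sum_i x_ia_i=0$ with $x_i\in\mathbb{Z}_d$ forces all $x_i=0$. Qudits: on $\mathbb{C}^d$ with orthonormal basis $\{|j\rangle\}_{j\in\mathbb{Z}_d}$ let $X|j\rangle=|j+1\rangle$, $Z|j\rangle=\omega^j|j\rangle$, $\omega=e^{2\pi i/d}$. The $n$-qudit Pauli group $\mathcal{P}_n$ is generated by the operators $X_j,Z_j$ (acting as $X$, resp. $Z$, on the $j$-th tensor factor of $(\mathbb{C}^d)^{\otimes n}$), together with $e^{\pi i/d}I$ when $d$ is even. Every element of $\mathcal{P}_n$ is a phase times $g(a)=X^{u_1}Z^{v_1}\otimes\cdots\otimes X^{u_n}Z^{v_n}$ for a unique $a=(u,v)\in\mathbb{Z}_d^{2n}$, and $g(a),g(b)$ commute iff $a^T\Lambda b=0$. An $[[n,k]]_d$ stabilizer group is $S=\langle g_1,\dots,g_{n-k}\rangle$ with $g_j\in\mathcal{P}_n$ pairwise commuting, each having $+1$ as an eigenvalue, and $|S|=d^{n-k}$; its code space is $\mathcal{C}(S)=\{\psi: g\psi=\psi\ \forall g\in S\}$, of dimension $d^k$. Writing $g_j$ as a phase times $g(a_j)$, the check matrix is the $2n\times(n-k)$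 matrix $H=[a_1|\cdots|a_{n-k}]$; its columns are linearly independent and satisfy $a_i^T\Lambda a_j=0$. Two stabilizer groups define the same $[[n,k]]_d$ stabilizer code iff their check matrices satisfy $H'=HA$ for some $A\in\mathrm{GL}(n-k,\mathbb{Z}_d)$ (in particular, stabilizer groups differing only by phases of the generators define the same code); equivalently, a code is determined by the subgroup of $\mathbb{Z}_d^{2n}$ spanned by the columns of its check matrix, i.e. by the span of $n-k$ linearly independent, pairwise symplectically orthogonal vectors of $\mathbb{Z}_d^{2n}$. *)

(* Defs.v *)
From mathcomp Require Import all_boot all_order all_algebra.
Set Implicit Arguments. Unset Strict Implicit. Unset Printing Implicit Defensive.
Import GRing.Theory.
Local Open Scope ring_scope.

(* Coordinates of Z_d^{2n} are indexed by 'I_(n+n): first n = u-part, last n = v-part. *)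

Definition Lambda (d n : nat) : 'M['Z_d]_(n + n) :=
  block_mx 0 1%:M (- 1%:M) 0.

Definition Sp (d n : nat) : {set 'M['Z_d]_(n + n)} :=
  [set M : 'M['Z_d]_(n + n) | M^T *m Lambda d n *m M == Lambda d n].

Definition symp (d n : nat) (a b : 'cV['Z_d]_(n + n)) : 'M['Z_d]_1 :=
  a^T *m Lambda d n *m b.

Definition lin_indep (d N m : nat) (a : {ffun 'I_m -> 'cV['Z_d]_N}) : bool :=
  [forall x : {ffun 'I_m -> 'Z_d},
     (\sum_(i < m) x i *: a i == 0) ==> [forall i, x i == 0]].

Definition span_set (d N m : nat) (a : {ffun 'I_m -> 'cV['Z_d]_N}) : {set 'cV['Z_d]_N} :=
  [set v | [exists x : {ffun 'I_m -> 'Z_d}, v == \sum_(i < m) x i *: a i]].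

(* [[n,k]]_d stabilizer codes, identified with the subgroups of Z_d^{2n} spanned by
   n-k linearly independent, pairwise symplectically orthogonal vectors. *)
Definition stab_codes (d n k : nat) : {set {set 'cV['Z_d]_(n + n)}} :=
  [set W | [exists a : {ffun 'I_(n - k) -> 'cV['Z_d]_(n + n)},
      [&& lin_indep a,
          [forall i, forall j, symp (a i) (a j) == 0]
        & W == span_set a]]].

Definition N_codes (d n k : nat) : nat := #|stab_codes d n k|.

(* embeddings of block 1 (indices 0..n-k-1) and block 3 (indices n..2n-k-1) *)
Definition emb1 (n k : nat) (i : 'I_(n - k)) : 'I_(n + n) :=
  lshift n (widen_ord (leq_subr k n) i).
Definition emb3 (n k : nat) (i : 'I_(n - k)) : 'I_(n + n) :=
  rshift n (widen_ord (leq_subr k n) i).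

Definition in_blk3 (n k : nat) (i : 'I_(n + n)) : bool := ((n <= i) && (i < n + (n - k)))%N.

(* T(n,k,d): symplectic matrices of the displayed block form with blocks
   (n-k, k, n-k, k): block (1,1) = (A^T)^{-1}, block (3,3) = A, A invertible,
   row-block 1 zero outside column-block 1, column-block 3 zero outside row-block 3. *)
Definition Tset (d n k : nat) : {set 'M['Z_d]_(n + n)} :=
  [set M in Sp d n | [exists A : 'M['Z_d]_(n - k),
     [&& A \in unitmx,
         [forall i, forall j, M (@emb1 n k i) (@emb1 n k j) == (invmx A^T) i j],
         [forall i, forall j, M (@emb3 n k i) (@emb3 n k j) == A i j],
         [forall i : 'I_(n + n), forall j : 'I_(n + n),
            ((i < n - k)%N && ~~ (j < n - k)%N) ==> (M i j == 0)]
       & [forall i : 'I_(n + n), forall j : 'I_(n + n),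
            (@in_blk3 n k j && ~~ @in_blk3 n k i) ==> (M i j == 0)]]]].

(* Main.v *)
Require Import Defs.
From mathcomp Require Import all_boot all_order all_algebra.
From mathcomp Require Import ring.
Set Implicit Arguments. Unset Strict Implicit. Unset Printing Implicit Defensive.
Import GRing.Theory.
Local Open Scope ring_scope.

Section Gen.
Variable R : finComUnitRingType.
Variable n : nat.
Local Notation V := 'cV[R]_(n + n).

Definition Lam : 'M[R]_(n + n) := block_mx 0 1%:M (- 1%:M) 0.
Definition SpR : {set 'M[R]_(n + n)} := [set M | M^T *m Lam *m M == Lam].
Definition sp (p q : V) : R := (p^T *m Lam *m q) 0 0.

Lemma Lam_col (u v : 'cV[R]_n) : Lam *m col_mx u v = col_mx v (- u).
Proof.
by rewrite /Lam mul_block_col !mul0mx mul1mx add0r addr0 mulNmx mul1mx.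
Qed.

Lemma spE p q : sp p q = \sum_(i < n) (p (lshift n i) 0 * q (rshift n i) 0
                                     - p (rshift n i) 0 * q (lshift n i) 0).
Proof.
rewrite /sp -(vsubmxK q) -{1}(vsubmxK p) -mulmxA Lam_col tr_col_mx mul_row_col.
rewrite !mxE vsubmxK -big_split; apply: eq_bigr => i _ /=.
by rewrite !mxE mulrN.
Qed.

Lemma sp_alt p : sp p p = 0.
Proof. by rewrite spE big1 // => i _; rewrite mulrC subrr. Qed.

Lemma trLam : Lam^T = - Lam.
Proof.
by rewrite /Lam tr_block_mx !trmx0 trmx1 linearN /= trmx1 opp_block_mx !oppr0 opprK.
Qed.

Lemma LamLam : Lam *m Lam = - 1%:M.
Proof.
rewrite /Lam mulmx_block !mul0mx !mulmx0 !add0r !addr0 mulmx1 mul1mx.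
by rewrite (scalar_mx_block n n 1) opp_block_mx oppr0.
Qed.

Lemma trLamLam : Lam^T *m Lam = 1%:M.
Proof. by rewrite trLam mulNmx LamLam opprK. Qed.

Lemma sp_mx p q : p^T *m Lam *m q = (sp p q)%:M.
Proof. exact: mx11_scalar. Qed.

Lemma spDl p1 p2 q : sp (p1 + p2) q = sp p1 q + sp p2 q.
Proof. by rewrite /sp linearD /= !mulmxDl mxE. Qed.
Lemma spBl p1 p2 q : sp (p1 - p2) q = sp p1 q - sp p2 q.
Proof. by rewrite /sp linearB /= !mulmxBl !mxE. Qed.
Lemma spDr p q1 q2 : sp p (q1 + q2) = sp p q1 + sp p q2.
Proof. by rewrite /sp !mulmxDr mxE. Qed.
Lemma spZl c p q : sp (c *: p) q = c * sp p q.
Proof. by rewrite /sp linearZ /= -!scalemxAl mxE. Qed.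
Lemma spZr c p q : sp p (c *: q) = c * sp p q.
Proof. by rewrite /sp -!scalemxAr mxE. Qed.

Lemma SpRP M : reflect (M^T *m Lam *m M = Lam) (M \in SpR).
Proof. by rewrite inE; apply: eqP. Qed.

Lemma SpR_linv M : M \in SpR -> (- (Lam *m M^T *m Lam)) *m M = 1%:M.
Proof.
move/SpRP=> H; rewrite mulNmx -!mulmxA (mulmxA M^T) H LamLam opprK //.
Qed.

Lemma SpR_unit M : M \in SpR -> M \in unitmx.
Proof. by move/SpR_linv/mulmx1_unit=> []. Qed.

Lemma SpR_tr M : M \in SpR -> M^T \in SpR.
Proof.
move=> H; have := mulmx1C (SpR_linv H).
rewrite mulmxN !mulmxA => /(congr1 -%R); rewrite opprK => H2.
apply/SpRP; rewrite trmxK.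
have : M *m Lam *m M^T *m Lam *m Lam = - 1%:M *m Lam by rewrite H2.
by rewrite -mulmxA LamLam mulmxN mulmx1 mulNmx mul1mx => /oppr_inj.
Qed.

Lemma SpR1 : 1%:M \in SpR.
Proof. by apply/SpRP; rewrite trmx1 mul1mx mulmx1. Qed.

Lemma SpR_mul M N : M \in SpR -> N \in SpR -> M *m N \in SpR.
Proof.
move=> /SpRP HM /SpRP HN; apply/SpRP.
by rewrite trmx_mul !mulmxA -(mulmxA N^T) -(mulmxA N^T) HM.
Qed.

Lemma SpR_inv M : M \in SpR -> invmx M \in SpR.
Proof.
move=> HM; have Hu := SpR_unit HM; move/SpRP: (HM) => H; apply/SpRP.
rewrite trmx_inv -{1}H !mulmxA mulVmx ?unitmx_tr // mul1mx.
by rewrite -mulmxA mulmxV // mulmx1.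
Qed.

Lemma SpR_sp M p q : M \in SpR -> sp (M *m p) (M *m q) = sp p q.
Proof.
move/SpRP=> H; rewrite /sp trmx_mul !mulmxA -(mulmxA p^T) -(mulmxA p^T) H //.
Qed.

Lemma SpR_Lam M : M \in SpR -> M *m Lam *m M^T = Lam.
Proof. by move/SpR_tr/SpRP; rewrite trmxK. Qed.

Definition tv (c : R) (w : V) : 'M[R]_(n + n) := 1%:M + c *: (w *m (w^T *m Lam)).

Lemma tv_act c w p : tv c w *m p = p + (c * sp w p) *: w.
Proof.
rewrite /tv mulmxDl mul1mx -scalemxAl -!mulmxA (mulmxA w^T) sp_mx mul_mx_scalar.
by rewrite scalerA.
Qed.

Lemma tv_Sp c w : tv c w \in SpR.
Proof.
apply/SpRP; rewrite /tv.
set X := w *m (w^T *m Lam).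
have XT : X^T = - (Lam *m w *m w^T).
  by rewrite /X !trmx_mul trmxK trLam !mulNmx.
have E : w^T *m Lam *m w = 0 by rewrite sp_mx sp_alt raddf0.
rewrite [(_ + _)^T]linearD /= [(_ *: _)^T]linearZ /= trmx1 XT.
rewrite mulmxDl mul1mx !mulmxDr mulmx1 -!scalemxAl -!scalemxAr.
rewrite /X mulmxDl -scalemxAl mulNmx !mulmxA -(mulmxA (Lam *m w) w^T Lam) !mulNmx -(mulmxA (Lam *m w) (w^T *m Lam) w) E mulmx0 !mul0mx oppr0 scaler0 addr0 scalerN addrNK.
by []. Qed.

Lemma tv_fix c w p : sp w p = 0 -> tv c w *m p = p.
Proof. by move=> H; rewrite tv_act H mulr0 scale0r addr0. Qed.

Lemma tv_move x y : sp y x \is a GRing.unit -> tv (sp y x)^-1 (y - x) *m x = y.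
Proof.
move=> U; rewrite tv_act spBl sp_alt subr0 mulVr // scale1r.
by rewrite addrC subrK.
Qed.


Lemma lrP (r : 'I_(n + n)) : (exists i, r = lshift n i) \/ (exists i, r = rshift n i).
Proof. by rewrite -(splitK r); case: (split r) => i; [left|right]; exists i. Qed.

Definition ev (j : 'I_n) : V := \col_r ((r == lshift n j)%:R).
Definition fv (j : 'I_n) : V := \col_r ((r == rshift n j)%:R).

Lemma ev_l j i : ev j (lshift n i) 0 = (i == j)%:R.
Proof. by rewrite mxE eq_shift. Qed.
Lemma ev_r j i : ev j (rshift n i) 0 = 0.
Proof. by rewrite mxE eq_shift. Qed.
Lemma fv_l j i : fv j (lshift n i) 0 = 0.
Proof. by rewrite mxE eq_shift. Qed.
Lemma fv_r j i : fv j (rshift n i) 0 = (i == j)%:R.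
Proof. by rewrite mxE eq_shift. Qed.

Lemma sum_delta (F : 'I_n -> R) j : \sum_(i < n) (i == j)%:R * F i = F j.
Proof.
rewrite (bigD1 j) //= eqxx mul1r big1 ?addr0 // => i /negbTE ->.
by rewrite mul0r.
Qed.
Lemma sum_delta' (F : 'I_n -> R) j : \sum_(i < n) F i * (i == j)%:R = F j.
Proof. by rewrite -(sum_delta F j); apply: eq_bigr => i _; rewrite mulrC. Qed.

Lemma sp_ev_l j q : sp (ev j) q = q (rshift n j) 0.
Proof.
rewrite spE -(sum_delta (fun i => q (rshift n i) 0) j); apply: eq_bigr => i _.
by rewrite ev_l ev_r mul0r subr0.
Qed.
Lemma sp_ev_r j p : sp p (ev j) = - p (rshift n j) 0.
Proof.
rewrite spE -(sum_delta' (fun i => - p (rshift n i) 0) j).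
by apply: eq_bigr => i _; rewrite ev_l ev_r mulr0 sub0r mulNr.
Qed.
Lemma sp_fv_l j q : sp (fv j) q = - q (lshift n j) 0.
Proof.
rewrite spE -(sum_delta (fun i => - q (lshift n i) 0) j).
by apply: eq_bigr => i _; rewrite fv_l fv_r mul0r sub0r mulrN.
Qed.
Lemma sp_fv_r j p : sp p (fv j) = p (lshift n j) 0.
Proof.
rewrite spE -(sum_delta' (fun i => p (lshift n i) 0) j); apply: eq_bigr => i _.
by rewrite fv_l fv_r mulr0 subr0.
Qed.

Definition xbar m (x : V) : V := \col_r (if (r < m)%N then 0 else x r 0).

Lemma decomp m (Hm : (m <= n)%N) (x : V) :
  x = xbar m x + \sum_(i < m) x (lshift n (widen_ord Hm i)) 0 *: ev (widen_ord Hm i).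
Proof.
apply/matrixP => r c; rewrite (ord1 c) !mxE summxE.
case: ifP => rm.
- have rn : (r < n)%N by apply: leq_trans Hm.
  have -> : r = lshift n (widen_ord Hm (Ordinal rm)) by apply: val_inj.
  rewrite add0r (bigD1 (Ordinal rm)) //= !mxE eqxx mulr1 big1 ?addr0 // => i ni.
  rewrite !mxE; case: eqP; last by rewrite mulr0.
  move/(congr1 val) => /= E; case/eqP: ni; exact: val_inj.
- rewrite big1 ?addr0 // => i _; rewrite !mxE; case: eqP; last by rewrite mulr0.
  by move=> E; move: rm; rewrite E /= ltn_ord.
Qed.

Lemma widen_lift m (i : 'I_m) : widen_ord (leqnSn m) i = lift ord_max i.
Proof. by apply: val_inj; rewrite /= /bump leqNgt ltn_ord. Qed.


Lemma mxBE k p (A B : 'M[R]_(k, p)) i j : (A - B) i j = A i j - B i j.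
Proof. by rewrite !mxE. Qed.

Lemma unit_inj k p (S : 'M[R]_k) (u v : 'M[R]_(k, p)) :
  S \in unitmx -> S *m u = S *m v -> u = v.
Proof. by move=> U E; rewrite -(mulKmx U u) E mulKmx. Qed.

Hypothesis SR : forall a c : R, exists t, a + t * (1 - c * a) \is a GRing.unit.
Hypothesis UM : forall (N : nat) (z : 'cV[R]_N),
  (forall y : R, y *: z = 0 -> y = 0) -> exists l : 'rV[R]_N, l *m z = 1%:M.

Lemma main m (Hm : (m <= n)%N) (a : 'I_m -> V) :
  (forall x : 'I_m -> R, \sum_i x i *: a i = 0 -> forall i, x i = 0) ->
  (forall i j, sp (a i) (a j) = 0) ->
  exists2 S, S \in SpR & forall i, S *m a i = ev (widen_ord Hm i).
Proof.
elim: m Hm a => [|m IH] Hm a LI ISO.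
  by exists 1%:M; [exact: SpR1 | case].
have Hm' : (m <= n)%N := ltnW Hm.
pose a' := fun i : 'I_m => a (widen_ord (leqnSn m) i).
have LI' : forall x : 'I_m -> R, \sum_i x i *: a' i = 0 -> forall i, x i = 0.
  move=> x Hx i.
  pose X := fun j : 'I_m.+1 => if unlift ord_max j is Some k then x k else 0.
  have HX : forall k, X (widen_ord (leqnSn m) k) = x k.
    by move=> k; rewrite /X widen_lift liftK.
  rewrite -HX; apply: LI.
  rewrite big_ord_recr /= {2}/X unlift_none scale0r addr0; apply: etrans Hx.
  by apply: eq_bigr => k _; rewrite HX.
have [S SS HS] := IH Hm' a' LI' (fun i j => ISO _ _).
have [x xE] : exists x, x = S *m a ord_max by eexists.
pose im : 'I_n := Ordinal Hm.
have Wx : forall j : 'I_n, (j < m)%N -> x (rshift n j) 0 = 0.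
  move=> j jm; rewrite -sp_ev_l.
  have -> : j = widen_ord Hm' (Ordinal jm) by apply: val_inj.
  by rewrite -HS xE SpR_sp // ISO.
have Su := SpR_unit SS.
have LIx : forall y : R, y *: xbar m x = 0 -> y = 0.
  move=> y Hy.
  pose X := fun j : 'I_m.+1 => if unlift ord_max j is Some k
            then - (y * x (lshift n (widen_ord Hm' k)) 0) else y.
  have HX : forall k, X (widen_ord (leqnSn m) k) = - (y * x (lshift n (widen_ord Hm' k)) 0).
    by move=> k; rewrite /X widen_lift liftK.
  have : \sum_i X i *: a i = 0.
    apply: (unit_inj Su); rewrite mulmx0 mulmx_sumr.
    rewrite big_ord_recr /= {2}/X unlift_none -scalemxAr -xE.
    rewrite (decomp Hm' x) scalerDr Hy add0r scaler_sumr addrC -big_split big1 // => k _ /=.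
    by rewrite -scalemxAr HS HX scaleNr scalerA subrr.
  by move/LI/(_ ord_max); rewrite /X unlift_none.
have [l Hl] := UM LIx.
pose l' : 'rV[R]_(n + n) := \row_r (if (r < m)%N then 0 else l 0 r).
have Hl' : (l' *m x) 0 0 = 1.
  transitivity ((l *m xbar m x) 0 0); last by rewrite Hl mxE.
  rewrite !mxE; apply: eq_bigr => r _; rewrite !mxE.
  by case: ifP => _; rewrite ?mulr0 ?mul0r.
have l'0 : forall j : 'I_n, (j < m)%N -> l' 0 (lshift n j) = 0.
  by move=> j jm; rewrite mxE /= jm.
clearbody l'.
pose vm := rshift n im.
pose xv := x vm 0.
pose a0 := l' 0 vm.
have [t Ht] := SR a0 xv.
pose r : 'rV[R]_(n + n) := (1 - t * xv) *: l' + t *: delta_mx 0 vm.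
pose q : V := Lam *m r^T.
have spqx : sp q x = 1.
  rewrite /sp /q trmx_mul trmxK -(mulmxA r) trLamLam mulmx1.
  rewrite !mxE in Hl'; rewrite /r mulmxDl -!scalemxAl !mxE Hl'.
  rewrite (bigD1 vm) //= big1 ?addr0.
    by rewrite !mxE !eqxx mul1r mulr1 subrK.
  by move=> k /negbTE nk; rewrite mxE nk andbF mul0r.
have qE : q = col_mx (dsubmx r^T) (- usubmx r^T).
  by rewrite /q -{1}(vsubmxK r^T) Lam_col.
have qu : q (lshift n im) 0 \is a GRing.unit.
  rewrite qE col_mxEu !mxE eqxx /= -/vm eqxx mulr1 -/a0.
  suff -> : (1 - t * xv) * a0 + t = a0 + t * (1 - xv * a0) by [].
  by ring.
have qr : forall j : 'I_n, (j < m)%N -> q (rshift n j) 0 = 0.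
  move=> j jm; rewrite qE col_mxEd !mxE l'0 // eq_shift mulr0 add0r mulr0 oppr0 //.
clearbody q.
have ku1 : sp q x \is a GRing.unit by rewrite spqx unitr1.
have ku2 : sp (fv im) q \is a GRing.unit by rewrite sp_fv_l unitrN.
have ku3 : sp (ev im) (fv im) \is a GRing.unit by rewrite sp_ev_l fv_r eqxx unitr1.
pose S' := tv (sp (ev im) (fv im))^-1 ((ev im) - (fv im)) *m tv (sp (fv im) q)^-1 ((fv im) - q)
           *m tv (sp q x)^-1 (q - x) *m S.
exists S'.
  by rewrite /S' !SpR_mul // tv_Sp.
move=> i; case: (unliftP ord_max i) => [k ->|->].
- rewrite -widen_lift.
  have -> : widen_ord Hm (widen_ord (leqnSn m) k) = widen_ord Hm' k by apply: val_inj.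
  have km : (widen_ord Hm' k < m)%N by rewrite /= ltn_ord.
  rewrite /S' -!mulmxA -/(a' k) HS.
  set j := widen_ord Hm' k in km *.
  have jn : (j == im) = false.
    by apply/negbTE; apply/eqP => E; move: km; rewrite E ltnn.
  rewrite [tv _ (q - x) *m _]tv_fix; last by rewrite sp_ev_r mxBE qr // Wx // subrr oppr0.
  rewrite [tv _ (fv im - q) *m _]tv_fix; last by rewrite sp_ev_r mxBE qr // fv_r jn subrr oppr0.
  by rewrite tv_fix // sp_ev_r mxBE ev_r fv_r jn subrr oppr0.
- rewrite /S' -!mulmxA -xE tv_move // tv_move // tv_move //.
Qed.

End Gen.

Section Zd.
Variable p : nat.
Local Notation N := p.+2.
Local Notation Z := 'Z_N.

Lemma Zval (x : Z) : x = (val x)%:R.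
Proof. by rewrite natr_Zp. Qed.

Lemma Zeq0 k : ((k%:R : Z) == 0) = (N %| k)%N.
Proof.
by rewrite -val_eqE /= val_Zp_nat //.
Qed.

Lemma SR_Z (a c : Z) : exists t : Z, a + t * (1 - c * a) \is a GRing.unit.
Proof.
set A := val a.
pose T := (\prod_(q <- primes N | ~~ (q %| A)) q)%N.
exists T%:R.
set b := 1 - c * a; set B := val b.
have -> : a + T%:R * b = (A + T * B)%:R by rewrite natrD natrM -!Zval.
rewrite unitZpE //.
have hb : ((B + val c * A) %% N = 1)%N.
  have : ((B + val c * A)%:R : Z) = 1 by rewrite natrD natrM -!Zval /b subrK.
  by move/(congr1 val); rewrite /= val_Zp_nat.
have key : forall q, prime q -> (q %| N)%N -> ~~ (q %| A + T * B)%N.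
  move=> q pq qN; case qA: (q %| A)%N.
  - have cqT : coprime q T.
      rewrite /T big_seq_cond; apply: (big_rec (fun x => coprime q x)).
        exact: coprimen1.
      move=> q' acc /andP[q'P q'A] cacc; rewrite coprimeMr cacc andbT.
      rewrite prime_coprime //; apply/negP => qq'.
      move: q'P; rewrite mem_primes => /andP[pq' _].
      move: qq'; rewrite dvdn_prime2 // => /eqP eq; move: q'A; rewrite -eq qA.
      by [].
    rewrite dvdn_addr // Gauss_dvdr //; apply/negP => qB.
    have : ((B + val c * A) %% q = 0)%N.
      by apply/eqP; rewrite -/(dvdn _ _) dvdn_add // dvdn_mull.
    by rewrite -(modn_dvdm _ qN) hb modn_small // prime_gt1.
  - have qT : (q %| T)%N.
      have qin : q \in primes N by rewrite mem_primes pq qN.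
      by rewrite /T (big_rem q qin) /= qA dvdn_mulr.
    by rewrite dvdn_addl ?qA // dvdn_mulr.
rewrite /coprime; apply/eqP.
set g := gcdn N (A + T * B).
have g0 : (0 < g)%N by rewrite gcdn_gt0.
case: (ltngtP g 1) => // g1; first by move: g0; rewrite ltnNge -ltnS g1.
have := key (pdiv g) (pdiv_prime g1).
rewrite (dvdn_trans (pdiv_dvd g)) ?dvdn_gcdl // => /(_ isT) /negP[].
exact: (dvdn_trans (pdiv_dvd g) (dvdn_gcdr _ _)).
Qed.

Lemma entryBZ k m (A B : 'M[Z]_(k, m)) c i j : (A - c *: B) i j = A i j - c * B i j.
Proof. by rewrite !mxE. Qed.

Lemma UM_Z K (z : 'cV[Z]_K) :
  (forall y : Z, y *: z = 0 -> y = 0) -> exists l : 'rV[Z]_K, l *m z = 1%:M.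
Proof.
move=> LI.
have PN : exists g, [&& (0 < g)%N & [exists l : 'rV[Z]_K, (l *m z) 0 0 == g%:R]].
  exists N; apply/andP; split=> //; apply/existsP; exists 0.
  by rewrite mul0mx mxE eq_sym Zeq0.
case: (ex_minnP PN) => g /andP[g0 /existsP[l0 /eqP Hl0]] gmin.
have memI : forall (W : nat) (l : 'rV[Z]_K), (l *m z) 0 0 = W%:R -> (g %| W)%N.
  move=> W l Hl; apply/negPn/negP => ngW.
  have r0 : (0 < W %% g)%N by rewrite lt0n.
  have : (g <= W %% g)%N.
    apply: gmin; rewrite r0 /=; apply/existsP; exists (l - (W %/ g)%:R *: l0).
    rewrite mulmxBl -scalemxAl entryBZ Hl Hl0 -natrM.
    by rewrite -natrB ?leq_divM // {1}(divn_eq W g) addKn.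
  by rewrite leqNgt ltn_pmod.
have gN : (g %| N)%N.
  apply: (memI N 0); rewrite mul0mx mxE; apply/esym/eqP; rewrite Zeq0 //.
pose y : Z := (N %/ g)%:R.
have y0 : y *: z = 0.
  apply/matrixP => j c; rewrite (ord1 c) !mxE.
  have : (g %| val (z j ord0))%N.
    apply: (memI _ ('e_j)); rewrite -rowE mxE; exact: Zval.
  case/dvdnP => k Hk; rewrite [z j 0]Zval Hk /y -natrM.
  apply/eqP; rewrite Zeq0 mulnCA divnK // dvdn_mull //.
have := LI y y0; move/eqP; rewrite Zeq0 => NNg.
have gle : (g <= N)%N by apply: dvdn_leq.
have Ng0 : (0 < N %/ g)%N by rewrite divn_gt0.
have : (N %/ g = N)%N.
  by apply/eqP; rewrite eqn_leq leq_div dvdn_leq.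
move=> E; have g1 : g = 1%N.
  have := divnK gN; rewrite E => /eqP; rewrite -{2}[N]muln1 eqn_pmul2l //.
  by move/eqP.
exists l0; rewrite [l0 *m z]mx11_scalar Hl0 g1 //.
Qed.

End Zd.

Section Part.
Variables (p n k : nat).
Local Notation d := p.+2.
Local Notation R := 'Z_d.
Local Notation V := 'cV[R]_(n + n).
Local Notation m := (n - k)%N.
Let Hm : (m <= n)%N := leq_subr k n.

Lemma Sp_eq : Sp d n = SpR R n.
Proof. by []. Qed.

Lemma symp_eq (a b : V) : symp a b = (sp a b)%:M.
Proof. exact: mx11_scalar. Qed.

Definition e (i : 'I_m) : V := ev R (widen_ord Hm i).

Definition W0 : {set V} := [set v : V | [forall r : 'I_(n + n), (m <= r)%N ==> (v r 0 == 0)]].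

Lemma e_entry (x : 'I_m -> R) (r : 'I_(n + n)) :
  (\sum_i x i *: e i) r 0 = if insub (val r) is Some i then x i else 0.
Proof.
rewrite summxE; case: insubP => [i ri vi|nr].
- rewrite (bigD1 i) //= big1 ?addr0.
    rewrite !mxE; suff -> : r = lshift n (widen_ord Hm i) by rewrite eqxx mulr1.
    by apply: val_inj; rewrite /= vi.
  move=> j ji; rewrite !mxE; case: eqP; last by rewrite mulr0.
  move=> E; case/eqP: ji; apply: val_inj; rewrite vi E //.
- rewrite big1 // => j _; rewrite !mxE; case: eqP; last by rewrite mulr0.
  by move=> E; move: nr; rewrite E /= ltn_ord.
Qed.

Lemma e_entry_l (x : 'I_m -> R) (j : 'I_m) :
  (\sum_i x i *: e i) (lshift n (widen_ord Hm j)) 0 = x j.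
Proof.
rewrite e_entry; case: insubP => [i _ vi|]; last by rewrite /= ltn_ord.
by congr x; apply: val_inj.
Qed.

Lemma W0P v : reflect (exists x : 'I_m -> R, v = \sum_i x i *: e i) (v \in W0).
Proof.
apply: (iffP idP).
- rewrite inE => /forallP H; exists (fun i => v (lshift n (widen_ord Hm i)) 0).
  rewrite {1}(decomp Hm v); suff -> : xbar m v = 0 by rewrite add0r.
  apply/matrixP => r c; rewrite (ord1 c) !mxE; case: ifP => // rm.
  by have := H r; rewrite leqNgt rm => /eqP.
- case=> x ->; rewrite inE; apply/forallP => r; apply/implyP => rm.
  by rewrite e_entry; case: insubP => // i ri _; move: ri; rewrite ltnNge rm.
Qed.

Lemma e_W0 i : e i \in W0.
Proof.
apply/W0P; exists (fun j => (j == i)%:R); apply/matrixP => r c.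
rewrite (ord1 c) e_entry !mxE; case: insubP => [j _ vj|nr].
  case: eqP => [E|NE].
    have -> : j = i by apply: val_inj; rewrite vj E.
    by case: eqP.
  case: eqP => // E; case: NE; apply: val_inj; rewrite -vj E //.
case: eqP => // E; move: nr; rewrite E /= ltn_ord //.
Qed.

Definition fS (M : 'M[R]_(n + n)) : {set V} := [set M^T *m v | v in W0].

Lemma fM_code M : M \in Sp d n -> fS M \in stab_codes d n k.
Proof.
move=> HM; have HMt := SpR_tr HM; have Mu : M^T \in unitmx := SpR_unit HMt.
rewrite inE; apply/existsP; exists [ffun i => M^T *m e i].
apply/and3P; split.
- apply/forallP => x; apply/implyP => /eqP H; apply/forallP => i.
  have : \sum_i x i *: e i = 0.
    apply: (unit_inj Mu); rewrite mulmx0 -[RHS]H mulmx_sumr.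
    by apply: eq_bigr => j _; rewrite ffunE -scalemxAr.
  by move/(congr1 (fun v : V => v (lshift n (widen_ord Hm i)) 0)); rewrite e_entry_l mxE => ->.
- apply/forallP => i; apply/forallP => j.
  by rewrite !ffunE symp_eq SpR_sp // /e sp_ev_l ev_r raddf0.
- apply/eqP/setP => v; rewrite inE; apply/imsetP/existsP.
  + case=> w /W0P[x ->] ->; exists [ffun i => x i]; apply/eqP; rewrite mulmx_sumr.
    by apply: eq_bigr => i _; rewrite !ffunE -scalemxAr.
  + case=> x /eqP ->; exists (\sum_i x i *: e i); first by apply/W0P; exists x.
    by rewrite mulmx_sumr; apply: eq_bigr => i _; rewrite !ffunE -scalemxAr.
Qed.

Lemma code_f W : W \in stab_codes d n k -> exists2 M, M \in Sp d n & fS M = W.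
Proof.
rewrite inE => /existsP[a /and3P[LI ISO /eqP ->]].
have LI' : forall x : 'I_m -> R, \sum_i x i *: a i = 0 -> forall i, x i = 0.
  move=> x Hx i; move/forallP: LI => /(_ [ffun i => x i]) /implyP.
  have H : \sum_i [ffun i => x i] i *: a i == 0.
    by rewrite (eq_bigr (fun i => x i *: a i)) ?Hx // => j _; rewrite ffunE.
  by move=> /(_ H) /forallP /(_ i) /eqP; rewrite ffunE.
have ISO' : forall i j, sp (a i) (a j) = 0.
  move=> i j; move/forallP: ISO => /(_ i) /forallP /(_ j).
  by rewrite symp_eq => /eqP/(congr1 (fun M : 'M[R]_1 => M 0 0)); rewrite !mxE /= mulr1n.
have [S HS Sa] := main (@SR_Z p) (@UM_Z p) Hm LI' ISO'.
have Su := SpR_unit HS.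
have ae : forall i, a i = invmx S *m e i by move=> i; rewrite /e -(Sa i) mulKmx.
exists (invmx S)^T; first by apply: SpR_tr; apply: SpR_inv.
apply/setP => v; rewrite /fS trmxK; apply/idP/idP.
- case/imsetP => w /W0P[x ->] ->; rewrite inE; apply/existsP.
  exists [ffun i => x i]; apply/eqP; rewrite mulmx_sumr.
  by apply: eq_bigr => i _; rewrite ffunE -scalemxAr ae.
- rewrite inE => /existsP[x /eqP ->]; apply/imsetP; exists (\sum_i x i *: e i).
    by apply/W0P; exists x.
  by rewrite mulmx_sumr; apply: eq_bigr => i _; rewrite -scalemxAr ae.
Qed.

Lemma LamE_l (v : V) i : (Lam R n *m v) (lshift n i) 0 = v (rshift n i) 0.
Proof. by rewrite -[in LHS](vsubmxK v) Lam_col col_mxEu mxE. Qed.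
Lemma LamE_r (v : V) i : (Lam R n *m v) (rshift n i) 0 = - v (lshift n i) 0.
Proof. by rewrite -[in LHS](vsubmxK v) Lam_col col_mxEd !mxE. Qed.

Definition dcol (c0 : 'I_(n + n)) : V := \col_r ((r == c0)%:R).

Lemma col_dcol (M : 'M[R]_(n + n)) c0 r : (M *m dcol c0) r 0 = M r c0.
Proof.
rewrite mxE (bigD1 c0) //= !mxE eqxx mulr1 big1 ?addr0 // => c /negbTE ci.
by rewrite !mxE ci mulr0.
Qed.

Lemma ev_dcol j : ev R j = dcol (lshift n j).
Proof. by []. Qed.
Lemma fv_dcol j : fv R j = dcol (rshift n j).
Proof. by []. Qed.

Lemma fv_Lam j : fv R j = - (Lam R n *m ev R j).
Proof.
apply/matrixP => r c; rewrite (ord1 c) [RHS]mxE.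
case: (lrP r) => [[i ->]|[i ->]].
- by rewrite LamE_l fv_l ev_r oppr0.
- by rewrite LamE_r fv_r ev_l opprK.
Qed.

Lemma Tset_i T : T \in Tset d n k -> T \in Sp d n /\ [set T^T *m v | v in W0] = W0.
Proof.
rewrite inE => /andP[HT /existsP[A /and5P[_ _ _ /forallP H4 _]]].
split => //; apply/eqP; rewrite eqEcard card_imset; last first.
  by move=> u v; apply: unit_inj; apply: SpR_unit; apply: SpR_tr.
rewrite leqnn andbT; apply/subsetP => _ /imsetP[v Hv ->].
rewrite inE; apply/forallP => r; apply/implyP => rm.
rewrite mxE big1 // => c _; rewrite mxE; case: (ltnP c m) => cm.
  have := H4 c => /forallP /(_ r) /implyP; rewrite cm -leqNgt rm => /(_ isT) /eqP ->.
  by rewrite mul0r.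
by move: Hv; rewrite inE => /forallP /(_ c) /implyP /(_ cm) /eqP ->; rewrite mulr0.
Qed.

Lemma Tset_ii T : T \in Sp d n -> [set T^T *m v | v in W0] = W0 -> T \in Tset d n k.
Proof.
move=> HT HW.
have HTt := SpR_tr HT; have Tu := SpR_unit HTt.
have c4 : forall i j : 'I_(n + n), (i < m)%N -> ~~ (j < m)%N -> T i j = 0.
  move=> i j im jm.
  have : T^T *m dcol i \in W0.
    rewrite -HW; apply: imset_f; rewrite inE; apply/forallP => r; apply/implyP => rm.
    rewrite mxE; case: (r =P i) => [E|_]; last by rewrite eqxx.
    by move: rm; rewrite E leqNgt im.
  rewrite inE => /forallP /(_ j) /implyP; rewrite leqNgt jm col_dcol mxE.
  by move=> /(_ isT) /eqP.
have wW : forall j : 'I_n, (j < m)%N -> invmx T^T *m ev R j \in W0.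
  move=> j jm; have : ev R j \in W0.
    by have := e_W0 (Ordinal jm); rewrite /e; congr (ev _ _ \in _); apply: val_inj.
  by rewrite -{1}HW => /imsetP[v Hv ->]; rewrite mulKmx.
have TLam : T *m Lam R n = Lam R n *m invmx T^T.
  by rewrite -[T *m Lam R n]mulmx1 -(mulmxV Tu) mulmxA SpR_Lam.
have Tf : forall j, T *m fv R j = - (Lam R n *m (invmx T^T *m ev R j)).
  by move=> j; rewrite fv_Lam mulmxN mulmxA TLam -mulmxA.
have W0z : forall v (r : 'I_(n + n)), v \in W0 -> ~~ (r < m)%N -> v r 0 = 0.
  move=> v r; rewrite inE => /forallP /(_ r) /implyP H rm.
  by apply/eqP; apply: H; rewrite leqNgt.
have e1 : forall i (j : 'I_n), (j < m)%N -> T (lshift n i) (rshift n j) = 0.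
  move=> i j jm; rewrite -col_dcol -fv_dcol Tf mxE LamE_l W0z ?oppr0 //.
    by apply: wW.
  by rewrite /= -leqNgt (leq_trans Hm) // leq_addr.
have e2 : forall (i : 'I_n) (j : 'I_n), (j < m)%N -> ~~ (i < m)%N -> T (rshift n i) (rshift n j) = 0.
  move=> i j jm im; rewrite -col_dcol -fv_dcol Tf mxE LamE_r (W0z _ _ (wW _ jm)) ?oppr0 //.
pose A := \matrix_(i, j) T (@emb3 n k i) (@emb3 n k j).
pose P := \matrix_(i, j) T (@emb1 n k i) (@emb1 n k j).
have PA : P^T *m A = 1%:M.
  apply/matrixP => a1 b1.
  have := SpR_sp (ev R (widen_ord Hm a1)) (fv R (widen_ord Hm b1)) HT.
  rewrite sp_fv_r ev_l spE => E.
  rewrite !mxE; transitivity ((widen_ord Hm b1 == widen_ord Hm a1)%:R : R); last first.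
    case: (a1 =P b1) => [->|ne]; first by rewrite eqxx.
    by case: eqP => // /(congr1 val) /= E2; case: ne; apply: val_inj.
  rewrite -E.
  rewrite [RHS](eq_bigr (fun i => T (lshift n i) (lshift n (widen_ord Hm a1)) * T (rshift n i) (rshift n (widen_ord Hm b1)))); last first.
    move=> i0 _; rewrite ev_dcol fv_dcol !col_dcol (e1 _ (widen_ord Hm b1)); last by rewrite /= ltn_ord.
    by rewrite mulr0 subr0.
  pose G := fun i : 'I_n => T (lshift n i) (lshift n (widen_ord Hm a1)) * T (rshift n i) (rshift n (widen_ord Hm b1)).
  have -> : \sum_(i < n) G i = \sum_(i < n | (i < m)%N) G i.
    rewrite [RHS]big_mkcond; apply: eq_bigr => i0 _; case: ifP => // im.
    by rewrite /G e2 ?mulr0 ?im // /= ltn_ord.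
  rewrite (big_ord_narrow (F:=G) Hm); apply: eq_bigr => i0 _.
  by rewrite !mxE.
have [_ Au] := mulmx1_unit PA.
have PinvA : P^T = invmx A.
  by rewrite -[P^T]mulmx1 -(mulmxV Au) mulmxA PA mul1mx.
rewrite inE HT /=; apply/existsP; exists A; apply/and5P; split => //.
- apply/forallP => i; apply/forallP => j.
  by rewrite -trmx_inv -PinvA trmxK mxE.
- by apply/forallP => i; apply/forallP => j; rewrite mxE.
- apply/forallP => i; apply/forallP => j; apply/implyP => /andP[im jm].
  by rewrite c4.
- apply/forallP => i; apply/forallP => j; apply/implyP => /andP[].
  rewrite /in_blk3; case: (lrP j) => [[j1 ->]|[j1 ->]].
    by rewrite /= leqNgt (ltn_ord j1).
  rewrite /= leq_addr ltn_add2l /= => j1m.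
  case: (lrP i) => [[i1 ->]|[i1 ->]]; first by rewrite e1.
  by rewrite /= leq_addr ltn_add2l /= => i1m; rewrite e2.
Qed.

Lemma fiber M0 : M0 \in Sp d n ->
  [set M in Sp d n | fS M == fS M0] = [set T *m M0 | T in Tset d n k].
Proof.
move=> HM0; have M0u := SpR_unit HM0; have M0tu := SpR_unit (SpR_tr HM0).
apply/setP => M; apply/idP/idP.
- rewrite inE => /andP[HM /eqP E]; apply/imsetP; exists (M *m invmx M0).
    apply: Tset_ii; first by apply: SpR_mul => //; apply: SpR_inv.
    apply/setP => w; apply/imsetP/idP.
    + case=> v Hv ->; have : M^T *m v \in fS M by apply: imset_f.
      rewrite E => /imsetP[u Hu Eu].
      by rewrite trmx_mul trmx_inv -mulmxA Eu mulKmx.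
    + move=> Hw; have : M0^T *m w \in fS M0 by apply: imset_f.
      rewrite -E => /imsetP[u Hu Eu]; exists u => //.
      by rewrite trmx_mul trmx_inv -mulmxA -Eu mulKmx.
  by rewrite -mulmxA mulVmx ?mulmx1.
- case/imsetP => T HT ->; have [HTs HW] := Tset_i HT.
  rewrite inE SpR_mul //=; apply/eqP/setP => w; apply/imsetP/imsetP.
  + case=> v Hv ->; exists (T^T *m v); first by rewrite -HW imset_f.
    by rewrite trmx_mul mulmxA.
  + case=> v Hv ->; have : v \in [set T^T *m v | v in W0] by rewrite HW.
    case/imsetP => u Hu ->; exists u => //; by rewrite trmx_mul mulmxA.
Qed.

Lemma count_eq : #|Sp d n| = (N_codes d n k * #|Tset d n k|)%N.
Proof.
transitivity (\sum_(W in stab_codes d n k) #|Tset d n k|)%N; last by rewrite sum_nat_const.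
rewrite -sum1_card (partition_big fS (mem (stab_codes d n k))) /=; last first.
  by move=> M HM; apply: fM_code.
apply: eq_bigr => W HW; have [M0 HM0 <-] := code_f HW.
rewrite sum1dep_card.
transitivity #|[set M in Sp d n | fS M == fS M0]|.
  by apply: eq_card => M; rewrite !inE.
rewrite fiber // card_imset // => A B /(congr1 (mulmx^~ (invmx M0))) /=.
by rewrite -!mulmxA mulmxV ?mulmx1 //; apply: SpR_unit.
Qed.

Lemma Tset_gt0 : (0 < #|Tset d n k|)%N.
Proof.
rewrite card_gt0; apply/set0Pn; exists 1%:M; apply: Tset_ii; first exact: SpR1.
apply/setP => v; apply/imsetP/idP.
  by case=> u Hu ->; rewrite trmx1 mul1mx.
by move=> Hv; exists v => //; rewrite trmx1 mul1mx.
Qed.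

End Part.

Theorem lemma1 (d n k : nat) (hd : (1 < d)%N) (hn : (0 < n)%N) (hk : (k < n)%N) :
  (#|Tset d n k| %| #|Sp d n|)%N /\
  N_codes d n k = (#|Sp d n| %/ #|Tset d n k|)%N.
Proof.
case: d hd => [|[|p]] // _.
rewrite (count_eq p n k); split; first exact: dvdn_mull.
by rewrite mulnK // Tset_gt0.
Qed.
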